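(* Let $K$ be an almost real closed field and let $p$ be a prime. Consider the formulae in the language of rings $\{+,\cdot\}$ (with constants $0,1$) \[\psi_p(x) := \big[\neg\exists y\colon (y^p = x \vee y^p = -x)\big] \wedge \big[\exists z\colon z^p = 1+x\big],\] \[\varphi_p(x) := \psi_p(x) \vee \big[\exists y\colon (y^p = x \vee y^p = -x) \wedge (\forall z\colon \psi_p(z) \rightarrow \psi_p(xz))\big] \vee x = 0.\] Then $\varphi_p(K) = \mathcal O_{v_p}$; in particular the valuation $v_p$ is definable in $(K,+,\cdot)$ (even without parameters).
   Context: A field $K$ is almost real closed if it admits a henselian valuation whose residue field is real closed; such a field is formally real. On a formally real field the henselian valuations are linearly ordered by inclusion of valuation rings, and the canonical henselian valuation $v_K$ is the finest one (its valuation ring is the smallest). Write $G := v_K(K^\times)$, an ordered abelian group written additively. For a convex subgroup $\Delta\subseteq G$ let $v_\Delta$ be the coarsening of $v_K$ given by $a\mapsto v_K(a)+\Delta \in G/\Delta$; every $v_\Delta$ is henselian and $\Delta\mapsto v_\Delta$ is a bijection between convex subgroups of $G$ and henselian valuations on $K$. For a prime $p$, $G_p$ denotes the maximal convex $p$-divisible subgroup of $G$, and $v_p := v_{G_p}$. $\mathcal O_v$ denotes the valuation ring of a valuation $v$. *)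

(* Defs.v *)
From mathcomp Require Import all_boot all_order all_algebra.
Set Implicit Arguments. Unset Strict Implicit. Unset Printing Implicit Defensive.
Import GRing.Theory.
Local Open Scope ring_scope.

Section Valuations.
Variable K : fieldType.

(* A valuation on K is represented (up to equivalence) by its valuation ring. *)
Definition valuation_ring (O : K -> Prop) : Prop :=
  [/\ O 0, O 1,
      (forall x y, O x -> O y -> O (x - y)),
      (forall x y, O x -> O y -> O (x * y)) &
      (forall x, x != 0 -> O x \/ O x^-1)].

Definition maxideal (O : K -> Prop) (x : K) : Prop :=
  O x /\ ~ (x != 0 /\ O x^-1).

Definition henselian (O : K -> Prop) : Prop :=
  valuation_ring O /\
  forall (f : {poly K}) (a : K),
    (forall i, O f`_i) -> O a ->
    maxideal O f.[a] -> ~ maxideal O (f^`()).[a] ->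
    exists b, [/\ O b, f.[b] = 0 & maxideal O (b - a)].

(* The residue field O/m is real closed (Artin--Schreier definition:
   formally real, every element is a square or minus a square,
   every odd degree polynomial has a root), expressed on representatives. *)
Definition residue_real_closed (O : K -> Prop) : Prop :=
  [/\ (forall s : seq K, (forall y, y \in s -> O y) -> ~ maxideal O (1 + \sum_(y <- s) y ^+ 2)),
      (forall a, O a -> exists b, O b /\ (maxideal O (b ^+ 2 - a) \/ maxideal O (b ^+ 2 + a))) &
      (forall f : {poly K}, (forall i, O f`_i) -> f \is monic -> odd (size f).-1 ->
         exists b, O b /\ maxideal O f.[b])].

Definition almost_real_closed : Prop :=
  exists O, henselian O /\ residue_real_closed O.

(* canonical henselian valuation of a formally real field: the finest
   henselian valuation, i.e. the smallest henselian valuation ring. *)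
Definition canonical_henselian (OK : K -> Prop) : Prop :=
  henselian OK /\ forall O, henselian O -> forall x, OK x -> O x.

(* Subsets of G = v_K(K^x) are represented by their preimages D in K^x.
   For nonzero x, y: v_K(x) <= v_K(y) iff OK (y / x). *)
Definition convex_subgroup (OK : K -> Prop) (D : K -> Prop) : Prop :=
  [/\ (forall x, D x -> x != 0), D 1,
      (forall x y, D x -> D y -> D (x * y)),
      (forall x, D x -> D x^-1) &
      (* convexity: 0 <= v(y) <= v(x), x in D  ==> y in D *)
      (forall x y, D x -> y != 0 -> OK y -> OK (x / y) -> D y)].

Definition p_divisible (OK : K -> Prop) (p : nat) (D : K -> Prop) : Prop :=
  forall x, D x -> exists y, [/\ D y, OK (y ^+ p / x) & OK (x / y ^+ p)].

Definition is_Gp (OK : K -> Prop) (p : nat) (D : K -> Prop) : Prop :=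
  [/\ convex_subgroup OK D, p_divisible OK p D &
      forall D', convex_subgroup OK D' -> p_divisible OK p D' ->
        forall x, D' x -> D x].

(* valuation ring of the coarsening v_Delta : a |-> v_K(a) + Delta *)
Definition coarsening (OK : K -> Prop) (D : K -> Prop) (x : K) : Prop :=
  x = 0 \/ exists d, D d /\ OK (x / d).

Definition psi_p (p : nat) (x : K) : Prop :=
  ~ (exists y : K, y ^+ p = x \/ y ^+ p = - x) /\ exists z : K, z ^+ p = 1 + x.

Definition phi_p (p : nat) (x : K) : Prop :=
  psi_p p x \/
  (exists y : K, (y ^+ p = x \/ y ^+ p = - x) /\
                 forall z : K, psi_p p z -> psi_p p (x * z)) \/
  x = 0.

End Valuations.

(* Main.v *)
Require Import Defs.
From mathcomp Require Import all_boot all_order all_algebra.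
From mathcomp Require Import all_boot all_order all_algebra.
From mathcomp.algebra_tactics Require Import ring.

From Stdlib Require Import Classical.
Set Implicit Arguments. Unset Strict Implicit. Unset Printing Implicit Defensive.
Import GRing.Theory.
Local Open Scope ring_scope.

Ltac fld := field; repeat (apply/andP; split); try done.

Section Val.
Variables (K : fieldType) (O : K -> Prop) (hO : valuation_ring O).

Lemma O0 : O 0. Proof. by case: hO. Qed.
Lemma O1 : O 1. Proof. by case: hO. Qed.
Lemma Osub x y : O x -> O y -> O (x - y). Proof. by case: hO => _ _ h _ _; apply: h. Qed.
Lemma Omul x y : O x -> O y -> O (x * y). Proof. by case: hO => _ _ _ h _; apply: h. Qed.
Lemma Oval x : x != 0 -> O x \/ O x^-1. Proof. by case: hO => _ _ _ _ h; apply: h. Qed.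
Lemma Oopp x : O x -> O (- x).
Proof. by move=> h; have := Osub O0 h; rewrite sub0r. Qed.
Lemma Oadd x y : O x -> O y -> O (x + y).
Proof. by move=> hx hy; have := Osub hx (Oopp hy); rewrite opprK. Qed.
Lemma Onat n : O n%:R.
Proof. elim: n => [|n IH]; first exact: O0. by rewrite mulrS; apply: Oadd => //; apply: O1. Qed.
Lemma Oexp x n : O x -> O (x ^+ n).
Proof. move=> h; elim: n => [|n IH]; first by rewrite expr0; exact: O1. by rewrite exprS; apply: Omul. Qed.
Lemma Onot x : ~ O x -> x != 0 /\ O x^-1.
Proof.
move=> h; have nz : x != 0 by apply/eqP => e; apply: h; rewrite e; exact: O0.
by split => //; case: (Oval nz).
Qed.
Lemma Oinv_or x : O x \/ O x^-1.
Proof. have [->|nz] := eqVneq x 0; [left; exact: O0 | exact: Oval]. Qed.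

Definition unitO x := x != 0 /\ O x /\ O x^-1.

Lemma m_unit x : maxideal O x -> unitO x -> False.
Proof. by move=> [_ h] [a [b c]]; apply: h. Qed.
Lemma notunit_m x : O x -> ~ unitO x -> maxideal O x.
Proof. by move=> h nu; split => // -[a b]; apply: nu. Qed.
Lemma m0 : maxideal O 0.
Proof. by split; [exact: O0 | case; rewrite eqxx]. Qed.
Lemma m_mul a c : maxideal O a -> O c -> maxideal O (a * c).
Proof.
move=> [ha hm] hc; split; first exact: Omul.
move=> [nz hi]; apply: hm.
have an : a != 0 by apply: contraNneq nz => ->; rewrite mul0r.
have cn : c != 0 by apply: contraNneq nz => ->; rewrite mulr0.
split => //; have -> : a^-1 = c * (a * c)^-1 by fld.
exact: Omul.
Qed.
Lemma m_opp a : maxideal O a -> maxideal O (- a).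
Proof.
move=> h; have := m_mul h (Oopp O1); by rewrite mulrN1.
Qed.
Lemma m_add a b : maxideal O a -> maxideal O b -> maxideal O (a + b).
Proof.
move=> ma mb; have [ha ka] := ma; have [hb kb] := mb; split; first exact: Oadd.
move=> [nz hi].
have [a0|an] := eqVneq a 0; first by apply: kb; move: nz hi; rewrite a0 add0r.
have [b0|bn] := eqVneq b 0; first by apply: ka; move: nz hi; rewrite b0 addr0.
case: (Oinv_or (b / a)) => h2.
  apply: ka; split => //; have -> : a^-1 = (1 + b/a) * (a+b)^-1 by fld.
  by apply: Omul => //; apply: Oadd => //; exact: O1.
apply: kb; split => //; have -> : b^-1 = (1 + a/b) * (a+b)^-1 by fld.
apply: Omul => //; apply: Oadd; first exact: O1.
by move: h2; rewrite invf_div.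
Qed.
Lemma m_sub a b : maxideal O a -> maxideal O b -> maxideal O (a - b).
Proof. by move=> ha hb; apply: m_add => //; apply: m_opp. Qed.

Lemma one_plus_m a : maxideal O a -> unitO (1 + a).
Proof.
move=> ma; have [ha _] := ma.
have O1a : O (1 + a) by apply: Oadd => //; exact: O1.
have nz : 1 + a != 0.
  apply/eqP => e; apply: (m_unit ma); have -> : a = -1 by rewrite -(addKr 1 a) e addr0.
  by split; [rewrite oppr_eq0 oner_eq0 | rewrite invrN1; split; apply: Oopp; exact: O1].
split => //; split => //; case: (classic (O (1 + a)^-1)) => // h.
have m1 : maxideal O (1 + a) by split => // -[_ hh].
have := m_sub m1 ma; rewrite addrK => m2; exfalso; apply: (m_unit m2).
by split; [exact: oner_neq0 | rewrite invr1; split; exact: O1].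
Qed.

Lemma unit_mul a b : unitO a -> unitO b -> unitO (a * b).
Proof.
move=> [a0 [ha ia]] [b0 [hb ib]]; split; first by rewrite mulf_neq0.
by split; [apply: Omul | rewrite invfM; apply: Omul].
Qed.
Lemma unit_inv a : unitO a -> unitO a^-1.
Proof. by move=> [a0 [ha ia]]; split; [rewrite invr_eq0 | rewrite invrK]. Qed.
Lemma unit_opp a : unitO a -> unitO (- a).
Proof.
move=> [a0 [ha ia]]; split; first by rewrite oppr_eq0.
by split; [apply: Oopp | rewrite invrN; apply: Oopp].
Qed.
Lemma unit1 : unitO 1.
Proof. by split; [exact: oner_neq0 | rewrite invr1; split; exact: O1]. Qed.

Lemma O_pow n w : (0 < n)%N -> O (w ^+ n) -> O w.
Proof.
case: n => // m _ h; case: (classic (O w)) => // /Onot [w0 hi].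
have -> : w = w ^+ m.+1 * (w^-1) ^+ m by rewrite exprVn exprS mulfK // expf_neq0.
by apply: Omul => //; apply: Oexp.
Qed.

Lemma hensel_Xn (hH : henselian O) n w b : (0 < n)%N -> O w -> O b ->
  maxideal O (b ^+ n - w) -> ~ maxideal O (b ^+ n.-1 *+ n) -> exists y, y ^+ n = w.
Proof.
move=> n0 hw hb m1 m2; case: hH => _ hH.
have [||||y [_ hy _]] := hH ('X^n - w%:P) b => //.
- move=> i; rewrite coefB coefXn coefC; apply: Osub; first exact: Onat.
  by case: (i == 0)%N => //; exact: O0.
- by rewrite hornerD hornerN hornerXn hornerC.
- by rewrite derivB derivXn derivC subr0 hornerMn hornerXn.
- exists y; apply: subr0_eq; move: hy; by rewrite hornerD hornerN hornerXn hornerC.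
Qed.

Lemma sum_nseq_sq n (a : K) : \sum_(y <- nseq n a) y ^+ 2 = (a ^+ 2) *+ n.
Proof. rewrite big_nseq; elim: n => [|n IH] /=; first by rewrite mulr0n. by rewrite IH mulrS. Qed.

Hypothesis hrc : residue_real_closed O.

Lemma formally_real n (s : K) : s ^+ 2 + n.+1%:R != 0.
Proof.
case: hrc => rc1 _ _; apply/eqP => e.
case: (classic (O s)) => hs.
  apply: (rc1 (s :: nseq n 1)).
    move=> y; rewrite in_cons mem_nseq => /orP [/eqP -> //|/andP [_ /eqP ->]]; exact: O1.
  rewrite big_cons sum_nseq_sq expr1n addrCA -mulrS e; exact: m0.
have [s0 hi] := Onot hs.
apply: (rc1 (nseq n.+1 s^-1)).
  by move=> y; rewrite mem_nseq => /andP [_ /eqP ->].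
rewrite sum_nseq_sq.
have -> : 1 + s^-1 ^+ 2 *+ n.+1 = s^-1 ^+ 2 * (s ^+ 2 + n.+1%:R).
  by rewrite mulrDr -exprMn mulVf // expr1n mulr_natr.
rewrite e mulr0; exact: m0.
Qed.

Lemma natn0 n : n.+1%:R != 0 :> K.
Proof. by have := formally_real n 0; rewrite expr0n add0r. Qed.

Lemma unit_nat n : unitO n.+1%:R.
Proof.
case: hrc => rc1 _ _; split; first exact: natn0.
split; first exact: Onat.
case: (classic (O (n.+1%:R)^-1)) => // h; exfalso.
apply: (rc1 (nseq n (1:K))); first by move=> y; rewrite mem_nseq => /andP [_ /eqP ->]; exact: O1.
rewrite sum_nseq_sq expr1n -mulrS; split; first exact: Onat.
by move=> [_ hh].
Qed.

Lemma unit_exp a n : unitO a -> unitO (a ^+ n).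
Proof. move=> h; elim: n => [|n IH]; first by rewrite expr0; exact: unit1. by rewrite exprS; apply: unit_mul. Qed.

Hypothesis hH : henselian O.

Lemma root_approx p w b : (0 < p)%N -> unitO w -> O b -> maxideal O (b ^+ p - w) ->
  exists y, y ^+ p = w.
Proof.
case: p => // q _ uw hb mb.
have Ow : O w by case: uw => _ [].
apply: (hensel_Xn hH (ltn0Sn q) Ow hb mb).
have ub : unitO b.
  case: (classic (unitO b)) => // nb; exfalso.
  have mb' : maxideal O (b ^+ q.+1) by rewrite exprS; apply: m_mul; [exact: notunit_m | exact: Oexp].
  have := m_sub mb' mb; rewrite opprB addrC subrK => mw; exact: (m_unit mw uw).
move=> m; apply: (m_unit m); rewrite -mulr_natr; apply: unit_mul; [exact: unit_exp | exact: unit_nat].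
Qed.

Lemma unit_pw p u : prime p -> unitO u -> exists y, y ^+ p = u \/ y ^+ p = - u.
Proof.
move=> pp uu; have p0 : (0 < p)%N by apply: prime_gt0.
case: hrc => _ rc2 rc3.
have Ou : O u by case: uu => _ [].
case: (even_prime pp) => [p2|op].
  have [b [hb [m1|m2]]] := rc2 u Ou.
    by have [y hy] := root_approx p0 uu hb ltac:(by rewrite p2); exists y; left.
  have [y hy] := root_approx p0 (unit_opp uu) hb ltac:(by rewrite p2 opprK).
  by exists y; right.
have [|||b [hb mb]] := rc3 ('X^p - u%:P).
- move=> i; rewrite coefB coefXn coefC; apply: Osub; first exact: Onat.
  by case: (i == 0)%N => //; exact: O0.
- exact: monicXnsubC.
- by rewrite size_XnsubC.
have [y hy] := root_approx p0 uu hb ltac:(by move: mb; rewrite hornerD hornerN hornerXn hornerC).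
by exists y; left.
Qed.
End Val.

Section Main.
Variables (K : fieldType) (p : nat) (O OK : K -> Prop).
Hypotheses (pp : prime p) (hO : henselian O) (hrc : residue_real_closed O)
  (hOK : henselian OK) (sub : forall x, OK x -> O x).

Let vO : valuation_ring O := hO.1.
Let vK : valuation_ring OK := hOK.1.
Let p0 : (0 < p)%N := prime_gt0 pp.

Definition pw (x : K) := exists y : K, y ^+ p = x \/ y ^+ p = - x.

Lemma pw_mul a b : pw a -> pw b -> pw (a * b).
Proof.
move=> [y1 h1] [y2 h2]; exists (y1 * y2); rewrite exprMn.
by case: h1 => ->; case: h2 => ->; rewrite ?mulrN ?mulNr ?opprK; auto.
Qed.
Lemma pw_inv a : pw a -> pw a^-1.
Proof. by move=> [y h]; exists y^-1; rewrite exprVn; case: h => ->; [left|right; rewrite invrN]. Qed.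
Lemma pw_p y : pw (y ^+ p).
Proof. by exists y; left. Qed.
Lemma pw0 : pw 0.
Proof. by exists 0; left; rewrite expr0n eqn0Ngt p0. Qed.
Lemma pw_div a b : a != 0 -> pw a -> pw (a * b) -> pw b.
Proof. by move=> a0 ha hab; rewrite -(mulKf a0 b); apply: pw_mul => //; apply: pw_inv. Qed.
Lemma pw_exp a n : pw a -> pw (a ^+ n).
Proof. move=> h; elim: n => [|n IH]; first by rewrite expr0; exists 1; left; rewrite expr1n. by rewrite exprS; apply: pw_mul. Qed.

Lemma unitK_O u : unitO OK u -> unitO O u.
Proof. by move=> [a [b c]]; split => //; split; apply: sub. Qed.

Lemma pwU u : unitO OK u -> pw u.
Proof. by move=> h; apply: (unit_pw vO hrc hO pp); apply: unitK_O. Qed.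

Lemma p_unit : unitO OK p%:R.
Proof.
case: (classic (unitO OK p%:R)) => // nu; exfalso.
have mp : maxideal OK p%:R by apply: notunit_m => //; apply: Onat.
case: hOK => _ hH.
have [||||r [_ hr _]] := hH ('X^2 + 'X + (p%:R)%:P) 0.
- move=> i; rewrite !coefD coefXn coefX coefC; apply: Oadd => //; first by apply: Oadd => //; apply: Onat.
  by case: (i == 0)%N => //; [case: mp | exact: O0].
- exact: O0.
- by rewrite !hornerD hornerXn hornerX hornerC expr0n /= !add0r.
- rewrite !derivD derivXn derivX derivC !hornerE /=.
  by move=> m; apply: (m_unit m); exact: unit1.
move: hr; rewrite !hornerD hornerXn hornerX hornerC.
have [q ->] : exists q, p = q.+1 by exists p.-1; rewrite prednK.
move=> e; have := formally_real vO hrc (4*q+2) (2*r+1).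
have -> : (2*r+1)^+2 + (4*q+2).+1%:R = 4 * (r^+2 + r + q.+1%:R) :> K by ring.
by rewrite e mulr0 eqxx.
Qed.

Lemma factB x : maxideal OK x -> exists z, z ^+ p = 1 + x.
Proof.
move=> mx; have [Ox _] := mx.
have [q eq] : exists q, p = q.+1 by exists p.-1; rewrite prednK.
apply: (hensel_Xn vK hOK p0 (b:=1)).
- by apply: Oadd => //; apply: O1.
- exact: O1.
- by rewrite expr1n opprD addrA subrr add0r; apply: m_opp.
- by rewrite expr1n => m; apply: (m_unit m); exact: p_unit.
Qed.

Lemma psi_fwd x : psi_p p x -> maxideal OK x /\ ~ pw x.
Proof.
move=> [npw [z hz]]; split => //.
have x0 : x != 0 by apply/eqP => e; apply: npw; rewrite e; exact: pw0.
case: (classic (OK x)) => hx.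
  apply: notunit_m => // uu; apply: npw; exact: pwU.
exfalso; have [_ hi] := Onot vK hx.
have ma : maxideal OK x^-1.
  apply: notunit_m => // -[_ [_ h]]; by apply: hx; rewrite -[x]invrK.
have ua := one_plus_m vK ma.
apply: npw.
have -> : x = z ^+ p * (1 + x^-1)^-1.
  rewrite hz; have ua0 : 1 + x^-1 != 0 by case: ua.
  have -> : 1 + x = x * (1 + x^-1) by rewrite mulrDr mulr1 mulfV // addrC.
  by rewrite mulfK.
apply: pw_mul; first exact: pw_p.
by apply: pwU; apply: unit_inv.
Qed.

Lemma psi_bwd x : maxideal OK x -> ~ pw x -> psi_p p x.
Proof. by move=> mx npw; split => //; apply: factB. Qed.


Variable D : K -> Prop.
Hypothesis hD : is_Gp OK p D.

Lemma D_nz y : D y -> y != 0.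
Proof. by case: hD => -[h _ _ _ _] _ _; apply: h. Qed.
Lemma D_inv y : D y -> D y^-1.
Proof. by case: hD => -[_ _ _ h _] _ _; apply: h. Qed.
Lemma D_conv a z : D a -> z != 0 -> OK z -> OK (a / z) -> D z.
Proof. by case: hD => -[_ _ _ _ h] _ _; apply: h. Qed.

Lemma Dpw y : D y -> pw y.
Proof.
move=> hy; case: hD => _ pd _; have [z [hz h1 h2]] := pd y hy.
have y0 := D_nz hy; have z0 := D_nz hz.
have u : unitO OK (y / z ^+ p).
  split; first by rewrite mulf_neq0 // invr_eq0 expf_neq0.
  by split => //; rewrite invf_div.
rewrite -(divfK (expf_neq0 p z0) y); apply: pw_mul; [exact: pwU | exact: pw_p].
Qed.

Lemma bwd x : coarsening OK D x -> phi_p p x.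
Proof.
case=> [->|[d [hd hxd]]]; first by right; right.
have [x0|x0] := eqVneq x 0; first by right; right.
have npwxz : pw x -> forall z, psi_p p z -> ~ pw (x * z).
  move=> px z /psi_fwd [_ nz] pxz; exact: nz (pw_div x0 px pxz).
case: (classic (OK x)) => hx.
  case: (classic (pw x)) => px.
    have [y hy] := px; right; left; exists y; split => // z hz.
    apply: psi_bwd; last exact: npwxz.
    by rewrite mulrC; apply: m_mul => //; case: (psi_fwd hz).
  left; apply: psi_bwd => //; apply: notunit_m => // u; apply: px; exact: pwU.
have [_ ht] := Onot vK hx.
have Dt : D x^-1.
  apply: (D_conv (a := d^-1)); [exact: D_inv | by rewrite invr_eq0 | exact: ht |].
  by rewrite invrK mulrC.
have px : pw x by rewrite -[x]invrK; apply: Dpw; apply: D_inv.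
have [y hy] := px; right; left; exists y; split => // z hz.
apply: psi_bwd; last exact: npwxz.
have [[Oz _] npz] := psi_fwd hz.
have z0 : z != 0 by apply/eqP => e; apply: npz; rewrite e; exact: pw0.
case: (classic (maxideal OK (x * z))) => // nm; exfalso.
have hi : OK (x * z)^-1.
  case: (classic (OK (x * z))) => hxz; last by case: (Onot vK hxz).
  by case: (classic (OK (x * z)^-1)) => // h; exfalso; apply: nm; split => // -[].
apply: npz; apply: Dpw; apply: (D_conv Dt z0 Oz).
by move: hi; rewrite invfM.
Qed.


Section Key.
Variable x : K.
Hypotheses (px : pw x) (nx : ~ OK x) (H : forall z, psi_p p z -> psi_p p (x * z)).

Let x0 : x != 0 := (Onot vK nx).1.
Let Ot : OK x^-1 := (Onot vK nx).2.
Let pt : pw x^-1 := pw_inv px.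

Lemma base g : g != 0 -> OK g -> OK (g^-1 * x^-1) -> pw g.
Proof.
move=> g0 Og hi; case: (classic (pw g)) => // npg; exfalso.
case: (classic (unitO OK g)) => ug; first by apply: npg; exact: pwU.
have := H (psi_bwd (notunit_m Og ug) npg) => /psi_fwd [[Oxg _] _].
have u : unitO OK (g * x).
  split; first by rewrite mulf_neq0.
  by split; [rewrite mulrC | rewrite invfM].
apply: npg; rewrite -(mulfK x0 g); apply: pw_mul => //; exact: pwU.
Qed.

Lemma key n g : g != 0 -> OK g -> OK (g^-1 * x^-1 ^+ n) -> pw g.
Proof.
elim: n g => [|n IH] g g0 Og.
  by rewrite expr0 mulr1 => hi; apply: pwU; split.
move=> hi; case: (classic (OK (g^-1 * x^-1 ^+ n))) => h; first exact: IH.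
have [_ h2] := Onot vK h; move: h2; rewrite invfM invrK => h2.
have tn0 : x^-1 ^+ n != 0 by rewrite expf_neq0 // invr_eq0.
have g'0 : g * (x^-1 ^+ n)^-1 != 0 by rewrite mulf_neq0 // invr_eq0.
have pg' : pw (g * (x^-1 ^+ n)^-1).
  apply: base => //; by rewrite invfM invrK -mulrA -exprSr.
rewrite -(divfK tn0 g); apply: pw_mul => //; exact: pw_exp.
Qed.

Definition D' (g : K) := g != 0 /\ exists n, OK (g * x^-1 ^+ n) /\ OK (g^-1 * x^-1 ^+ n).

Lemma D'_pw g : D' g -> pw g.
Proof.
move=> [g0 [n [h1 h2]]]; case: (classic (OK g)) => Og; first exact: (key g0 Og h2).
have [_ Oi] := Onot vK Og.
rewrite -[g]invrK; apply: pw_inv; apply: (key (n:=n)) => //; first by rewrite invr_eq0.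
by rewrite invrK.
Qed.

Lemma D'_conv : convex_subgroup OK D'.
Proof.
split.
- by move=> g [].
- split; first exact: oner_neq0.
  by exists 0%N; rewrite expr0 invr1 mulr1; split; exact: O1.
- move=> a b [a0 [n [h1 h2]]] [b0 [m [h3 h4]]]; split; first by rewrite mulf_neq0.
  exists (n + m)%N; rewrite exprD invfM; split.
    by rewrite mulrACA; apply: Omul.
  by rewrite mulrACA; apply: Omul.
- move=> a [a0 [n [h1 h2]]]; split; first by rewrite invr_eq0.
  by exists n; rewrite invrK.
- move=> a z [a0 [n [h1 h2]]] z0 Oz haz; split => //; exists n; split.
    by apply: Omul => //; apply: Oexp.
  have -> : z^-1 * x^-1 ^+ n = (a / z) * (a^-1 * x^-1 ^+ n) by fld.
  exact: Omul.
Qed.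

Lemma D'_pdiv : p_divisible OK p D'.
Proof.
move=> g hg; have [y hy] := D'_pw hg; have [g0 [n [h1 h2]]] := hg.
have y0 : y != 0.
  apply/eqP => e; move: hy; rewrite e expr0n eqn0Ngt p0 /=.
  by case=> /esym /eqP; rewrite ?oppr_eq0 (negbTE g0).
have [o1 o2] : OK (y ^+ p * g^-1) /\ OK (g * (y ^+ p)^-1).
  case: hy => ->; first by rewrite mulfV //; split; exact: O1.
  rewrite mulNr invrN mulrN mulfV //; split; apply: (Oopp vK); exact: (O1 vK).
have [q epq] : exists q, p = q.+1 by exists p.-1; rewrite prednK.
have e1 : (x^-1 ^+ n) ^+ p = x^-1 ^+ n * (x^-1 ^+ n) ^+ q by rewrite epq exprS.
exists y; split => //; split => //; exists n; split.
  apply: (O_pow vK p0); rewrite exprMn.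
  rewrite e1; have -> : y ^+ p * (x^-1 ^+ n * (x^-1 ^+ n) ^+ q) = (y ^+ p * g^-1) * (g * x^-1 ^+ n) * (x^-1 ^+ n) ^+ q.
    by fld.
  by apply: (Omul vK); [apply: (Omul vK) | apply: (Oexp vK); apply: (Oexp vK)].
apply: (O_pow vK p0); rewrite exprMn [y^-1 ^+ p]exprVn.
rewrite e1; have -> : (y ^+ p)^-1 * (x^-1 ^+ n * (x^-1 ^+ n) ^+ q) = (g * (y ^+ p)^-1) * (g^-1 * x^-1 ^+ n) * (x^-1 ^+ n) ^+ q.
  by field; rewrite g0 expf_neq0.
by apply: (Omul vK); [apply: (Omul vK) | apply: (Oexp vK); apply: (Oexp vK)].
Qed.

Lemma Dx : D x.
Proof.
case: hD => _ _ mx.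
have : D x^-1.
  apply: (mx D' D'_conv D'_pdiv); split; first by rewrite invr_eq0.
  exists 1%N; rewrite expr1 mulVf ?invr_eq0 //; split => //; [exact: Omul | exact: O1].
by move/D_inv; rewrite invrK.
Qed.
End Key.

Lemma fwd x : phi_p p x -> coarsening OK D x.
Proof.
have D1 : D 1 by case: hD => -[].
case=> [hps|[[y [hy H]]|->]]; last by left.
  by right; exists 1; split => //; rewrite divr1; case: (psi_fwd hps) => -[].
case: (classic (OK x)) => hx; first by right; exists 1; split => //; rewrite divr1.
right; exists x; split; first by apply: (Dx (x:=x)) => //; exists y.
by rewrite divff; [exact: O1 | exact: (Onot vK hx).1].
Qed.
End Main.

Theorem proposition1p5 (K : fieldType) (p : nat) :
  prime p -> almost_real_closed K ->
  forall (OK : K -> Prop), canonical_henselian OK ->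
  forall (D : K -> Prop), is_Gp OK p D ->
  forall x : K, phi_p p x <-> coarsening OK D x.
Proof.
move=> pp [O [hO hrc]] OK [hOK min] D hD x.
have sub := min O hO.
split; [exact: (fwd pp hO hrc hOK sub hD) | exact: (bwd pp hO hrc hOK sub hD)].
Qed.
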